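(* Let $R$ be a ring with unit and let $C$ be a bounded chain complex of finitely generated free $R[x,x^{-1}]$-modules. Then there exists a strict perfect complex of sheaves $\mathcal{V} = (V^- \xrightarrow{\mu^-} V \xleftarrow{\mu^+} V^+)$ on $\mathbb{P}^1$ such that: (1) the complexes $V^-$ and $V^+$ consist of finitely generated free $R[x^{-1}]$- and $R[x]$-modules, respectively; (2) the complex $V$ is isomorphic to $C$; (3) the complex of global sections $H^0(\mathbb{P}^1;\mathcal{V})$, given in each degree $n$ by $\ker(-\mu^-+\mu^+\colon V^-_n\oplus V^+_n\to V_n)$, is a bounded complex of finitely generated free $R$-modules; (4) $H^j(\mathbb{P}^1;\mathcal{V}) = 0$ in each chain degree for all $j\geq 1$; that is, $-\mu^-+\mu^+\colon V^-_n\oplus V^+_n\to V_n$ is surjective for every $n$.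
   Context: Modules are right modules. A sheaf on $\mathbb{P}^1$ over $R$ is a diagram $M^- \xrightarrow{\mu^-} M \xleftarrow{\mu^+} M^+$ where $M^-$ is an $R[x^{-1}]$-module, $M$ an $R[x,x^{-1}]$-module, $M^+$ an $R[x]$-module, $\mu^-$ is $R[x^{-1}]$-linear, $\mu^+$ is $R[x]$-linear, and the adjoint maps $M^-\otimes_{R[x^{-1}]}R[x,x^{-1}]\to M$ and $M^+\otimes_{R[x]}R[x,x^{-1}]\to M$ are isomorphisms; morphisms are compatible triples of linear maps. A vector bundle is a sheaf whose three entries are finitely generated projective over their respective rings; a strict perfect complex of sheaves is a bounded chain complex of vector bundles. For a sheaf $\mathcal{M}$ the cohomology modules are $H^0(\mathbb{P}^1;\mathcal{M}) = \ker(-\mu^-+\mu^+\colon M^-\oplus M^+\to M)$, $H^1(\mathbb{P}^1;\mathcal{M}) = \mathrm{coker}(-\mu^-+\mu^+)$, and $H^j = 0$ for $j\ne 0,1$; these are $R$-modules. *)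

(* Defs.v *)
From HB Require Import structures.
From mathcomp Require Import all_boot all_order all_algebra.

Set Implicit Arguments.
Unset Strict Implicit.
Unset Printing Implicit Defensive.

Import Order.TTheory GRing.Theory Num.Theory.
Local Open Scope ring_scope.

(* The Laurent polynomial ring R[x,x^-1], given by its defining        *)
(* property: L is a ring with an injective ring morphism               *)
(* iota : R[x] -> L such that iota 'X is invertible with inverse y and *)
(* every element of L is of the form iota p * y^k (= p x^-k).          *)
(* Such (L, iota) is unique up to unique isomorphism over R[x]: it is  *)
(* the localization of R[x] at the central element x.                  *)
Definition is_laurent (R L : nzRingType) (iota : {rmorphism {poly R} -> L})
  (y : L) : Prop :=
  [/\ iota 'X * y = 1, y * iota 'X = 1, injective iota &
      forall l : L, exists (p : {poly R}) (k : nat), l = iota p * y ^+ k].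

(* R[x^-1] is modelled as {poly R} (variable t standing for x^-1);    *)
(* its inclusion into R[x,x^-1] sends t to y = x^-1.                   *)
Definition laurent_minus (R L : nzRingType) (iota : {rmorphism {poly R} -> L})
  (y : L) (q : {poly R}) : L :=
  \sum_(i < size q) iota (q`_i)%:P * y ^+ i.

(* Chain complexes of finitely generated free RIGHT A-modules,         *)
(* indexed by int: the module in degree n is A^(rk n) (column vectors, *)
(* A acting on the right), the differential d_n : A^(rk n) ->          *)
(* A^(rk (n-1)) is left multiplication by the matrix dif n.            *)
Record fcomplex (A : nzRingType) := FComplex {
  rk : int -> nat;
  dif : forall n : int, 'M[A]_(rk (n - 1)%R, rk n)
}.

Definition is_complex (A : nzRingType) (C : fcomplex A) : Prop :=
  forall n : int, dif C (n - 1) *m dif C n = 0.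

Definition bounded_cx (A : nzRingType) (C : fcomplex A) : Prop :=
  exists N : nat, forall n : int, (N < absz n)%N -> rk C n = 0%N.

Definition cx_iso (A : nzRingType) (V C : fcomplex A) : Prop :=
  exists phi : forall n : int, 'M[A]_(rk C n, rk V n),
    (forall n : int, dif C n *m phi n = phi (n - 1) *m dif V n) /\
    (forall n : int, bijective (fun v : 'cV[A]_(rk V n) => phi n *m v)).

(* Chain complexes of sheaves V^- --mu^- --> V <-- mu^+ -- V^+ on P^1 *)
(* whose three entries are finitely generated FREE over R[x^-1],       *)
(* R[x,x^-1], R[x] respectively.  mu^+_n : R[x]^(a) -> L^(k) is        *)
(* u |-> mup n *m iota(u) (R[x]-linear); mu^-_n : R[x^-1]^(b) -> L^(k) *)
(* is u |-> mum n *m j(u) with j = laurent_minus (R[x^-1]-linear).     *)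
Record fsheaf_cx (R L : nzRingType) := FSheafCx {
  Vm : fcomplex {poly R};   (* over R[x^-1] *)
  V0 : fcomplex L;
  Vp : fcomplex {poly R};   (* over R[x] *)
  mum : forall n : int, 'M[L]_(rk V0 n, rk Vm n);
  mup : forall n : int, 'M[L]_(rk V0 n, rk Vp n)
}.

Section SheafDefs.
Variables (R L : nzRingType) (iota : {rmorphism {poly R} -> L}) (y : L).
Local Notation jm := (laurent_minus iota y).

(* the adjoint maps V^(+-)_n (x) R[x,x^-1] -> V_n, which under         *)
(* R[x]^a (x) L = L^a are v |-> mup n *m v, are isomorphisms.          *)
Definition is_strict_perfect (V : fsheaf_cx R L) : Prop :=
  [/\ is_complex (Vm V) /\ is_complex (V0 V) /\ is_complex (Vp V),
      bounded_cx (Vm V) /\ bounded_cx (V0 V) /\ bounded_cx (Vp V),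
      (forall n : int, mum V (n - 1) *m map_mx jm (dif (Vm V) n)
                       = dif (V0 V) n *m mum V n) /\
      (forall n : int, mup V (n - 1) *m map_mx iota (dif (Vp V) n)
                       = dif (V0 V) n *m mup V n) &
      (forall n : int, bijective (fun v : 'cV[L]_(rk (Vm V) n) => mum V n *m v)) /\
      (forall n : int, bijective (fun v : 'cV[L]_(rk (Vp V) n) => mup V n *m v))].

Definition cech (V : fsheaf_cx R L) (n : int)
  (u : 'cV[{poly R}]_(rk (Vm V) n)) (w : 'cV[{poly R}]_(rk (Vp V) n))
  : 'cV[L]_(rk (V0 V) n) :=
  - (mum V n *m map_mx jm u) + mup V n *m map_mx iota w.

(* H^0(P^1; V_n) = ker(cech) is a finitely generated free (right)     *)
(* R-module: it has a finite R-basis (columns of Em, Ep), R acting on  *)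
(* the right through constant polynomials.                             *)
Definition H0_fg_free (V : fsheaf_cx R L) (n : int) : Prop :=
  exists (r : nat) (Em : 'M[{poly R}]_(rk (Vm V) n, r))
         (Ep : 'M[{poly R}]_(rk (Vp V) n, r)),
    (forall c : 'cV[R]_r,
        cech (Em *m map_mx polyC c) (Ep *m map_mx polyC c) = 0) /\
    (forall u w, cech u w = 0 ->
       exists! c : 'cV[R]_r,
         u = Em *m map_mx polyC c /\ w = Ep *m map_mx polyC c).

Definition H1_vanishes (V : fsheaf_cx R L) (n : int) : Prop :=
  forall v : 'cV[L]_(rk (V0 V) n), exists u w, cech u w = v.

End SheafDefs.

(* Main.v *)
Require Import Defs.
From HB Require Import structures.
From mathcomp Require Import all_boot all_order all_algebra.
From Stdlib Require Import ClassicalEpsilon.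
From mathcomp Require Import zify.
Set Implicit Arguments.
Unset Strict Implicit.
Unset Printing Implicit Defensive.
Import GRing.Theory.
Local Open Scope ring_scope.

Section Aux.
Variables (R L : nzRingType) (iota : {rmorphism {poly R} -> L}) (y : L).
Hypothesis HL : is_laurent iota y.
Local Notation x := (iota 'X).
Local Notation jm := (laurent_minus iota y).

Lemma xy : x * y = 1. Proof. by case: HL. Qed.
Lemma yx : y * x = 1. Proof. by case: HL. Qed.
Lemma iota_inj : injective iota. Proof. by case: HL. Qed.

Lemma iotaC_x p : GRing.comm (iota p) x.
Proof. by rewrite /GRing.comm -!rmorphM commr_polyX. Qed.

Lemma yC l : GRing.comm y l.
Proof.
case: HL => _ _ _ /(_ l) [p [k ->]].
apply: commrM; last exact: commrX.
rewrite /GRing.comm.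
by rewrite -[LHS]mulr1 -xy !mulrA -(mulrA y) iotaC_x mulrA yx mul1r.
Qed.

Lemma xC l : GRing.comm x l.
Proof.
case: HL => _ _ _ /(_ l) [p [k ->]].
apply: commrM; first by rewrite /GRing.comm iotaC_x.
apply: commrX; rewrite /GRing.comm xy yx //.
Qed.

Lemma xyk k : x ^+ k * y ^+ k = 1.
Proof. by rewrite -exprMn_comm ?xy ?expr1n //; apply: xC. Qed.
Lemma yxk k : y ^+ k * x ^+ k = 1.
Proof. by rewrite -exprMn_comm ?yx ?expr1n //; apply: yC. Qed.

Lemma xnC a l : GRing.comm (x ^+ a) l.
Proof. apply/commr_sym/commrX/commr_sym/xC. Qed.
Lemma ynC a l : GRing.comm (y ^+ a) l.
Proof. apply/commr_sym/commrX/commr_sym/yC. Qed.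

Lemma xyn a b : x ^+ a * y ^+ b = if (a <= b)%N then y ^+ (b - a) else x ^+ (a - b).
Proof.
case: leqP => h.
  by rewrite -{1}(subnK h) exprD mulrA (xnC a) -mulrA xyk mulr1.
by rewrite -{1}(subnK (ltnW h)) exprD -mulrA xyk mulr1.
Qed.

Definition fc : {rmorphism R -> L} := iota \o polyC.
Lemma fc_inj : injective fc.
Proof. by move=> a b /iota_inj/polyC_inj. Qed.
Lemma cfu : commr_rmorph fc y.
Proof. by move=> a; apply: yC. Qed.
Local Notation hm := (horner_morph cfu).

Lemma jmE q : jm q = hm q.
Proof.
rewrite /horner_morph horner_coef size_map_inj_poly ?rmorph0 //; last exact: fc_inj.
by apply: eq_bigr => i _; rewrite coef_map.
Qed.

Lemma map_jmE m n (A : 'M[{poly R}]_(m, n)) : map_mx jm A = map_mx hm A.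
Proof. by apply/matrixP => i j; rewrite !mxE jmE. Qed.

Lemma hmX : hm 'X = y. Proof. exact: horner_morphX. Qed.
Lemma hmC c : hm c%:P = iota c%:P. Proof. exact: horner_morphC. Qed.


Lemma xyn' a b : (b <= a)%N -> x ^+ a * y ^+ b = x ^+ (a - b).
Proof.
move=> h; rewrite xyn; case: leqP => h2 //.
have -> : a = b by apply/eqP; rewrite eqn_leq h h2.
by rewrite !subnn !expr0.
Qed.

Lemma hmCX c k : hm (c%:P * 'X^k) = iota c%:P * y ^+ k.
Proof. by rewrite rmorphM rmorphXn; congr (_ * _ ^+ _); [exact: horner_morphC | exact: horner_morphX]. Qed.

Lemma jmM p q : jm (p * q) = jm p * jm q.
Proof. by rewrite !jmE rmorphM. Qed.
Lemma jmD p q : jm (p + q) = jm p + jm q.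
Proof. by rewrite !jmE rmorphD. Qed.
Lemma jmN p : jm (- p) = - jm p.
Proof. by rewrite !jmE rmorphN. Qed.
Lemma jm0 : jm 0 = 0.
Proof. by rewrite !jmE rmorph0. Qed.
Lemma jm_sum n (F : 'I_n -> {poly R}) : jm (\sum_(j < n) F j) = \sum_(j < n) jm (F j).
Proof. by rewrite jmE rmorph_sum; apply: eq_bigr => j _; rewrite jmE. Qed.
Lemma jmCX c k : jm (c%:P * 'X^k) = iota c%:P * y ^+ k.
Proof. by rewrite jmE hmCX. Qed.
Lemma jmX k : jm ('X^k) = y ^+ k.
Proof. by rewrite -[X in jm X]mul1r -polyC1 jmCX rmorph1 mul1r. Qed.

Lemma iotaCX c k : iota (c%:P * 'X^k) = iota c%:P * x ^+ k.
Proof. by rewrite rmorphM rmorphXn. Qed.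

Lemma coef_sumXe n (a : nat -> R) (e : nat -> nat) k :
  (\sum_(j < n) (a j)%:P * 'X^(e j))`_k = \sum_(j < n) a j * (k == e j)%:R.
Proof. by rewrite coef_sum; apply: eq_bigr => j _; rewrite coefCM coefXn. Qed.

Lemma coef_sumX n (a : nat -> R) k :
  (\sum_(j < n) (a j)%:P * 'X^j)`_k = \sum_(j < n) a j * (k == j)%:R.
Proof. by rewrite coef_sum; apply: eq_bigr => j _; rewrite coefCM coefXn. Qed.

Lemma sum_delta n (a : nat -> R) (P : nat -> bool) j0 :
  (forall j, (j < n)%N -> P j = (j == j0)) ->
  \sum_(j < n) a j * (P j)%:R = if (j0 < n)%N then a j0 else 0.
Proof.
move=> HP; case: ltnP => h.
  rewrite (bigD1 (Ordinal h)) //= HP // eqxx mulr1 big1 ?addr0 //.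
  move=> j /eqP hj; rewrite HP //; case: eqP => [e|_]; last by rewrite mulr0.
  by exfalso; apply: hj; apply: val_inj.
rewrite big1 // => j _; rewrite HP //; case: eqP => [e|_]; last by rewrite mulr0.
by move: (ltn_ord j); rewrite e ltnNge h.
Qed.

Lemma S1 g (a : nat -> R) :
  x ^+ g * jm (\sum_(j < g.+1) (a j)%:P * 'X^(g - j)) =
  iota (\sum_(j < g.+1) (a j)%:P * 'X^j).
Proof.
rewrite jm_sum rmorph_sum mulr_sumr; apply: eq_bigr => j _.
rewrite jmCX iotaCX mulrA (xnC g) -mulrA xyn' ?leq_subr // subKn //.
by rewrite -ltnS.
Qed.

Lemma poly_exp (p : {poly R}) n : (size p <= n)%N ->
  p = \sum_(j < n) (p`_j)%:P * 'X^j.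
Proof.
move=> h; apply/polyP => k; rewrite coef_sumX (sum_delta _ (j0:=k)).
  by case: ltnP => // hk; move/leq_sizeP: h; apply.
by move=> j _; rewrite eq_sym.
Qed.

Lemma S2 g u w : x ^+ g * jm u = iota w ->
  (size w <= g.+1)%N /\ u = \sum_(j < g.+1) (w`_j)%:P * 'X^(g - j).
Proof.
move=> E.
set s := size u.
have H : w * 'X^s = \sum_(i < s) (u`_i)%:P * 'X^(s + g - i).
  apply: iota_inj; rewrite rmorphM rmorphXn -E -(xnC s) mulrA -exprD.
  rewrite /laurent_minus -/s mulr_sumr rmorph_sum; apply: eq_bigr => i _.
  rewrite iotaCX mulrA (xnC (s + g)) -mulrA xyn' //.
  by apply: leq_trans (ltnW (ltn_ord i)) (leq_addr _ _).
have Hc k : (w * 'X^s)`_k = \sum_(i < s) u`_i * (k == s + g - i)%N%:R.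
  by rewrite H coef_sumXe.
have Hw : (size w <= g.+1)%N.
  apply/leq_sizeP => j hj.
  have := Hc (j + s); rewrite coefMXn ltnNge leq_addl /= addnK => ->.
  rewrite big1 // => i _; case: eqP => [e|]; last by rewrite mulr0.
  by have := ltn_ord i; lia.
split=> //.
apply/polyP => k; rewrite coef_sumXe.
case: (leqP k g) => hk.
  rewrite (@sum_delta _ (fun j => w`_j) (fun j => k == (g - j)%N) (g - k)%N); last first.
    by move=> j hj; apply/eqP/eqP; lia.
  rewrite ltnS leq_subr.
  have := Hc (g - k + s)%N; rewrite coefMXn ltnNge leq_addl /= addnK => ->.
  rewrite (@sum_delta _ (fun i => u`_i) (fun i => (g - k + s)%N == (s + g - i)%N) k); last by move=> i hi; apply/eqP/eqP; lia.
  by case: ltnP => // hks; apply/(leq_sizeP _ _ (leqnn _)).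
rewrite (@sum_delta _ (fun j => w`_j) (fun j => k == (g - j)%N) (g.+1)); last first.
  move=> j hj; apply/idP/idP => /eqP; lia.
rewrite ltnn.
case: (ltnP k s) => hks; last by apply/(leq_sizeP _ _ (leqnn _)).
have := Hc (s + g - k)%N; rewrite coefMXn.
have -> : (s + g - k < s)%N by lia.
rewrite (@sum_delta _ (fun i => u`_i) (fun i => (s + g - k)%N == (s + g - i)%N) k); last by move=> i hi; apply/eqP/eqP; lia.
by rewrite hks.
Qed.

Lemma jm_inj : injective jm.
Proof.
move=> p q E.
have E0 : x ^+ 0 * jm (p - q) = iota 0 by rewrite jmD jmN E subrr rmorph0 mulr0.
apply/eqP; rewrite -subr_eq0; apply/eqP.
have [_ ->] := S2 E0.
by rewrite big1 // => j _; rewrite coef0 mul0r.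
Qed.

Lemma iota_exp (p : {poly R}) :
  iota p = \sum_(i < size p) iota (p`_i)%:P * x ^+ i.
Proof.
rewrite -{1}[p]coefK poly_def rmorph_sum; apply: eq_bigr => i _.
by rewrite -mul_polyC iotaCX.
Qed.

Lemma decomp l : exists s q, l = jm s + iota q.
Proof.
case: HL => _ _ _ /(_ l) [p [k ->]].
rewrite iota_exp mulr_suml.
apply: (big_ind (fun l => exists s q, l = jm s + iota q)).
- by exists 0, 0; rewrite jm0 rmorph0 addr0.
- move=> a b [s1 [q1 ->]] [s2 [q2 ->]]; exists (s1 + s2), (q1 + q2).
  by rewrite jmD rmorphD addrACA.
move=> i _; rewrite -mulrA xyn; case: leqP => _.
  by exists ((p`_i)%:P * 'X^(k - i)), 0; rewrite rmorph0 addr0 jmCX.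
by exists 0, ((p`_i)%:P * 'X^(i - k)); rewrite jm0 add0r iotaCX.
Qed.

Lemma yiota p : exists m q, jm q = y ^+ m * iota p.
Proof.
elim/poly_ind: p => [|p c [m [q E]]].
  by exists 0%N, 0; rewrite jm0 rmorph0 mulr0.
exists m.+1, (q + c%:P * 'X^(m.+1)).
rewrite jmD jmCX E rmorphD rmorphM mulrDr; congr (_ + _); last first.
  by rewrite ynC.
by rewrite exprSr -!mulrA; congr (_ * _); rewrite mulrA yC -mulrA yx mulr1.
Qed.

Definition PI k l := exists p, iota p = x ^+ k * l.
Definition PJ k l := exists q, jm q = y ^+ k * l.

Lemma map_jmM m n p (A : 'M[{poly R}]_(m, n)) (B : 'M[{poly R}]_(n, p)) :
  map_mx jm (A *m B) = map_mx jm A *m map_mx jm B.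
Proof. by rewrite !map_jmE map_mxM. Qed.

Lemma yxC a b l : GRing.comm (y ^+ a * x ^+ b) l.
Proof. by apply/commr_sym/commrM; apply/commr_sym; [apply: ynC | apply: xnC]. Qed.

Lemma ent (a : L) m (u w : 'cV[{poly R}]_m) i :
  (- (a%:M *m map_mx jm u) + 1%:M *m map_mx iota w) i 0 =
  - (a * jm (u i 0)) + iota (w i 0).
Proof. by rewrite mul1mx mul_scalar_mx !mxE. Qed.

Lemma cancel1 a b d : x ^+ a * (y ^+ a * x ^+ b * d) = d * x ^+ b.
Proof. by rewrite !mulrA xyk mul1r xnC. Qed.

Lemma PI_mono k l : PI k l -> PI k.+1 l.
Proof. by case=> p E; exists ('X * p); rewrite rmorphM E exprS mulrA. Qed.
Lemma PJ_mono k l : PJ k l -> PJ k.+1 l.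
Proof.
case=> q E; exists ('X^1 * q); by rewrite jmM jmX E expr1 mulrA -exprS.
Qed.
Lemma PI_ex l : exists k, PI k l.
Proof.
case: HL => _ _ _ /(_ l) [p [k ->]].
by exists k, p; rewrite mulrA xnC -mulrA xyk mulr1.
Qed.
Lemma PJ_ex l : exists k, PJ k l.
Proof.
case: HL => _ _ _ /(_ l) [p [k ->]].
have [m [q E]] := yiota p.
by exists m, (q * 'X^k); rewrite jmM jmX E mulrA.
Qed.

End Aux.

Section Bound.
Variables (L : nzRingType) (P : nat -> L -> Prop).
Hypothesis Pmono : forall k l, P k l -> P k.+1 l.
Hypothesis Pex : forall l, exists k, P k l.

Lemma Pmono' k k' l : (k <= k')%N -> P k l -> P k' l.
Proof.
move=> h; rewrite -(subnK h); elim: (k' - k)%N => // n IH /IH; exact: Pmono.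
Qed.

Lemma bound_seq (T : eqType) (f : T -> L) (s : seq T) :
  exists K, forall t, t \in s -> P K (f t).
Proof.
elim: s => [|a s [K IH]]; first by exists 0%N.
have [k Hk] := Pex (f a).
exists (maxn k K) => t; rewrite inE => /orP [/eqP ->|/IH].
  by apply: Pmono' Hk; apply: leq_maxl.
by apply: Pmono'; apply: leq_maxr.
Qed.

Lemma bound_mx m n (A : 'M[L]_(m, n)) : exists K, forall i j, P K (A i j).
Proof.
have [K HK] := bound_seq (fun t : 'I_m * 'I_n => A t.1 t.2) (enum {: 'I_m * 'I_n}).
by exists K => i j; apply: (HK (i, j)); rewrite mem_enum.
Qed.

Lemma bound_cx (a b : int -> nat) (F : forall n : int, 'M[L]_(a n, b n)) N :
  exists K, forall n, (absz n <= N)%N -> forall i j, P K (F n i j).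
Proof.
elim: N => [|N [K IH]].
  have [K HK] := bound_mx (F 0).
  by exists K => n; rewrite leqn0 absz_eq0 => /eqP ->.
have [K1 H1] := bound_mx (F N.+1%:Z).
have [K2 H2] := bound_mx (F (- N.+1%:Z)).
exists (maxn K (maxn K1 K2)) => n hn i j.
have M0 : (K <= maxn K (maxn K1 K2))%N by apply: leq_maxl.
have M1 : (K1 <= maxn K (maxn K1 K2))%N by rewrite !leq_max leqnn orbT.
have M2 : (K2 <= maxn K (maxn K1 K2))%N by rewrite !leq_max leqnn !orbT.
case: (leqP (absz n) N) => h; first by apply: Pmono' M0 (IH n h i j).
have e : absz n = N.+1 by apply/eqP; rewrite eqn_leq hn h.
case: n e hn h i j => m /= e hn h i j.
  by move: i j; rewrite e => i j; apply: Pmono' M1 (H1 i j).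
move: i j; have -> : Negz m = - N.+1%:Z by rewrite NegzE e.
by move=> i j; apply: Pmono' M2 (H2 i j).
Qed.

End Bound.

Definition Emat (R : nzRingType) m g (e : nat -> nat) : 'M[{poly R}]_(m, m * g) :=
  \matrix_(i, k) \sum_(j < g) ((vec_mx (delta_mx 0 k) : 'M[R]_(m, g)) i j)%:P * 'X^(e j).

Lemma Emat_idx (R : nzRingType) m g e i i' j' :
  Emat R m g e i (mxvec_index i' j') = if i == i' then 'X^(e j') else 0.
Proof.
rewrite mxE vec_mx_delta.
rewrite (bigD1 j') //= big1 ?addr0.
  by rewrite mxE eqxx andbT; case: eqP => _; rewrite ?polyC1 ?mul1r ?polyC0 ?mul0r.
by move=> j /negbTE nj; rewrite mxE nj andbF polyC0 mul0r.
Qed.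

Lemma Emat_mul (R : nzRingType) m g e (c : 'cV[R]_(m * g)) i :
  (Emat R m g e *m map_mx polyC c) i 0 =
  \sum_(j < g) (c (mxvec_index i j) 0)%:P * 'X^(e j).
Proof.
rewrite mxE (reindex (uncurry (@mxvec_index m g))); last first.
  exact: curry_mxvec_bij.
pose F := fun (i' : 'I_m) (j' : 'I_g) => Emat R m g e i (mxvec_index i' j') * (map_mx polyC c) (mxvec_index i' j') 0.
transitivity (\sum_(p : ('I_m * 'I_g)%type) F p.1 p.2).
  by apply: eq_big => // -[a b] _.
rewrite -(pair_bigA _ F).
change (\sum_(i' < m) \sum_(j < g) F i' j = \sum_(j < g) (c (mxvec_index i j) 0)%:P * 'X^(e j)).
rewrite /F.
rewrite (bigD1 i) //= [X in _ + X]big1 ?addr0.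
  by apply: eq_bigr => j _; rewrite Emat_idx eqxx mxE commr_polyXn.
move=> i' /negbTE ni; apply: big1 => j _.
by rewrite Emat_idx eq_sym ni mul0r.
Qed.

Lemma mulmx_cmap (L : nzRingType) (s t : L) m n p (A : 'M[L]_(m, n)) (B : 'M[L]_(n, p)) :
  (forall l, GRing.comm t l) ->
  map_mx (fun l => s * l) A *m map_mx (fun l => t * l) B =
  map_mx (fun l => (s * t) * l) (A *m B).
Proof.
move=> Ht; apply/matrixP => i j; rewrite !mxE mulr_sumr; apply: eq_bigr => k _.
rewrite !mxE -!mulrA; congr (_ * _); rewrite !mulrA; congr (_ * _); exact/esym/Ht.
Qed.

Lemma mul_mx_scalarE (L : nzRingType) m n (a : L) (A : 'M[L]_(m, n)) :
  A *m a%:M = map_mx (fun l => l * a) A.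
Proof.
apply/matrixP => i j; rewrite !mxE (bigD1 j) //= big1 ?addr0.
  by rewrite mxE eqxx mulr1n.
by move=> k /negbTE nk; rewrite mxE nk mulr0n mulr0.
Qed.

Lemma mul_scalar_mxE (L : nzRingType) m n (a : L) (A : 'M[L]_(m, n)) :
  a%:M *m A = map_mx (fun l => a * l) A.
Proof. by rewrite mul_scalar_mx; apply/matrixP => i j; rewrite !mxE. Qed.

Lemma bij_scalar (L : nzRingType) (a b : L) n :
  a * b = 1 -> b * a = 1 -> bijective (fun v : 'cV[L]_n => a%:M *m v).
Proof.
move=> h1 h2; exists (fun v => b%:M *m v) => v /=;
by rewrite mulmxA -scalar_mxM ?h1 ?h2 mul1mx.
Qed.

Lemma map_mx_injf (A B : Type) (f : A -> B) m n : injective f ->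
  injective (map_mx f : 'M[A]_(m, n) -> 'M[B]_(m, n)).
Proof.
move=> fi M1 M2 E; apply/matrixP => i j.
by apply: fi; have := congr1 (fun M : 'M[B]_(m, n) => M i j) E; rewrite /= !mxE.
Qed.

Lemma sum_inord (R : nzRingType) g (F : 'I_g.+1 -> R) (e : nat -> nat) :
  \sum_(j < g.+1) (F j)%:P * 'X^(e j) =
  \sum_(j < g.+1) (F (inord j))%:P * 'X^(e j).
Proof. by apply: eq_bigr => j _; rewrite inord_val. Qed.

Lemma map_cmul0 (L : nzRingType) (s : L) m n :
  map_mx (fun l => s * l) (0 : 'M[L]_(m, n)) = 0.
Proof. by apply/matrixP => i j; rewrite !mxE mulr0. Qed.

Theorem mainTheorem4 (R L : nzRingType) (iota : {rmorphism {poly R} -> L})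
  (y : L) (C : fcomplex L) :
  is_laurent iota y -> is_complex C -> bounded_cx C ->
  exists V : fsheaf_cx R L,
    [/\ is_strict_perfect iota y V,
        cx_iso (V0 V) C,
        (forall n : int, H0_fg_free iota y V n) &
        (forall n : int, H1_vanishes iota y V n)].
Proof.
move=> HL Hcx [N HN].
have rel : forall n (i : 'I_(rk C (n - 1))) (j : 'I_(rk C n)),
    (absz n <= N)%N /\ (absz (n - 1) <= N)%N.
  move=> n i j; split; rewrite leqNgt; apply/negP => /HN h.
    by move: j; rewrite h => -[].
  by move: i; rewrite h => -[].
have [K HK] := bound_cx (@PI_mono R L iota) (PI_ex HL) (dif C) N.
pose beta (n : int) := (K * absz (n + N%:Z)%R)%N.
pose sI (n : int) := y ^+ beta (n - 1) * iota 'X ^+ beta n.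
pose D' (n : int) := map_mx (fun l => sI n * l) (dif C n).
have D'E : forall n i j, exists p, iota p = D' n i j.
  move=> n i j; have [h1 h2] := rel n i j.
  have -> : D' n i j = iota 'X ^+ K * dif C n i j.
    rewrite mxE /sI /beta; congr (_ * _).
    have -> : absz (n + N%:Z)%R = (absz (n - 1 + N%:Z)%R + 1)%N by lia.
    by rewrite mulnDr muln1 exprD mulrA yxk ?mul1r.
  exact: HK.
have [K2 HK2] := bound_cx (@PJ_mono R L iota y HL) (PJ_ex HL) D' N.
pose gam (n : int) := (K2 * absz (N%:Z - n)%R)%N.
pose sJ (n : int) := y ^+ gam (n - 1) * iota 'X ^+ gam n.
pose T (n : int) := map_mx (fun l => sJ n * l) (D' n).
have TE : forall n i j, exists q, laurent_minus iota y q = T n i j.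
  move=> n i j; have [h1 h2] := rel n i j.
  have -> : T n i j = y ^+ K2 * D' n i j.
    rewrite [LHS]mxE /sJ /gam; congr (_ * _).
    have -> : absz (N%:Z - (n - 1))%R = (absz (N%:Z - n)%R + 1)%N by lia.
    by rewrite mulnDr muln1 exprD -mulrA (ynC HL K2) mulrA yxk ?mul1r.
  exact: HK2.
pose preI := fun l : L => epsilon (inhabits (0 : {poly R})) (fun p => iota p = l).
pose preJ := fun l : L => epsilon (inhabits (0 : {poly R}))
   (fun q => laurent_minus iota y q = l).
have mapI : forall n, map_mx iota (map_mx preI (D' n)) = D' n.
  move=> n; apply/matrixP => i j; rewrite [LHS]mxE [X in iota X]mxE.
  exact: (epsilon_spec _ _ (D'E n i j)).
have mapJ : forall n, map_mx (laurent_minus iota y) (map_mx preJ (T n)) = T n.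
  move=> n; apply/matrixP => i j; rewrite [LHS]mxE [X in laurent_minus iota y X]mxE.
  exact: (epsilon_spec _ _ (TE n i j)).
pose Vm := @FComplex {poly R} (rk C) (fun n => map_mx preJ (T n)).
pose V0 := @FComplex L (rk C) D'.
pose Vp := @FComplex {poly R} (rk C) (fun n => map_mx preI (D' n)).
exists (@FSheafCx R L Vm V0 Vp (fun n => (iota 'X ^+ gam n)%:M) (fun n => 1%:M)).
have cxD' : forall n, D' (n - 1) *m D' n = 0.
  move=> n; rewrite mulmx_cmap; last exact: yxC.
  by rewrite Hcx map_cmul0.
split.
- rewrite /is_strict_perfect; split.
  + split; [|split].
    * move=> n /=; apply: (map_mx_injf (jm_inj HL)).
      rewrite map_jmM // !mapJ mulmx_cmap; last exact: yxC.
      rewrite cxD' map_cmul0.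
      by apply/matrixP => i j; rewrite !mxE jm0.
    * by move=> n /=; apply: cxD'.
    * move=> n /=; apply: (map_mx_injf (iota_inj HL)).
      rewrite map_mxM !mapI cxD'.
      by apply/matrixP => i j; rewrite !mxE rmorph0.
  + by split; [|split]; exists N.
  + split.
    * move=> n /=; rewrite mapJ mul_scalar_mxE mul_mx_scalarE.
      by apply/matrixP => i j; rewrite !mxE /sJ (cancel1 HL).
    * by move=> n /=; rewrite mul1mx mulmx1 mapI.
  + split.
    * by move=> n /=; apply: (bij_scalar (b := y ^+ gam n)); rewrite ?(xyk HL) ?(yxk HL).
    * by move=> n /=; apply: (bij_scalar (b := 1)); rewrite mulr1.
- exists (fun n => (iota 'X ^+ beta n)%:M); split => n.
    rewrite mul_scalar_mxE mul_mx_scalarE /=.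
    by apply/matrixP => i j; rewrite !mxE /sI (cancel1 HL).
  by apply: (bij_scalar (b := y ^+ beta n)); rewrite ?(xyk HL) ?(yxk HL).
- move=> n.
  exists (rk C n * (gam n).+1)%N,
    (Emat R (rk C n) (gam n).+1 (fun j => gam n - j)%N),
    (Emat R (rk C n) (gam n).+1 (fun j => j)).
  split.
    move=> c; apply/matrixP => i k; rewrite (ord1 k) /cech /= ent !Emat_mul.
    rewrite !(@sum_inord _ _ (fun j => c (mxvec_index i j) 0)).
    rewrite (@S1 _ _ iota y HL _ (fun k => c (mxvec_index i (inord k)) 0)).
    rewrite mxE; apply/eqP; rewrite addrC subr_eq0; apply/eqP; congr (iota _).
    by apply: eq_bigr => j _; rewrite inord_val.
  move=> u w /matrixP H.
  have Hi : forall i, iota 'X ^+ gam n * laurent_minus iota y (u i 0) = iota (w i 0).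
    move=> i; have := H i 0; rewrite /cech /= ent mxE.
    by move/eqP; rewrite addrC subr_eq0 => /eqP.
  exists ((mxvec (\matrix_(i, j) (w i 0)`_j : 'M[R]_(rk C n, (gam n).+1)))^T).
  split.
    split; apply/matrixP => i k; rewrite (ord1 k) Emat_mul;
      under eq_bigr do rewrite mxE mxvecE mxE.
      by rewrite (proj2 (S2 HL (Hi i))).
    by rewrite [LHS](poly_exp (proj1 (S2 HL (Hi i)))).
  move=> c' [Hu Hw]; apply/matrixP => k z; rewrite (ord1 z).
  case/mxvec_indexP: k => i j.
  rewrite mxE mxvecE mxE Hw Emat_mul.
  rewrite coef_sum (bigD1 j) //= coefCM coefXn eqxx mulr1 big1 ?addr0 //.
  move=> k /negbTE nk; rewrite coefCM coefXn.
  case: (j =P k :> nat) => [e|_]; last by rewrite mulr0.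
  by rewrite -(val_inj e) eqxx in nk.
- move=> n v.
  have : forall i : 'I_(rk C n), exists sq : {poly R} * {poly R},
      v i 0 = laurent_minus iota y sq.1 + iota sq.2.
    by move=> i; have [s [q E]] := decomp HL (v i 0); exists (s, q).
  case/fin_all_exists => f Hf.
  exists (\col_i (- ('X^(gam n) * (f i).1))), (\col_i (f i).2).
  apply/matrixP => i k; rewrite (ord1 k) /cech /= ent !mxE (Hf i).
  by rewrite (jmN HL) (jmM HL) (jmX HL) mulrN opprK mulrA (xyk HL) mul1r.
Qed.
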